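(* Let $\mathscr{M}_n$ be the monoid of multipermutations on $[n]$, let $D$ be a $\mathcal{D}$-class of $\mathscr{M}_n$ containing a prime element, and let $T$ be a generating set of the monoid $\mathscr{M}_n$. Then $D\cap T\neq\emptyset$.
   Context: A multipermutation on $[n]$ is a binary relation on $[n]$ in which every element has at least one successor and at least one predecessor (equivalently an $n\times n$ Boolean matrix with no zero row or column); $\mathscr{M}_n$ is the monoid of these under composition of relations (Boolean matrix multiplication), a submonoid of the monoid $\mathcal{B}_n$ of all binary relations on $[n]$. An element $\alpha\in\mathcal{B}_n$ is prime if it is not a permutation and whenever $\alpha=\beta\gamma$ with $\beta,\gamma\in\mathcal{B}_n$, one of $\beta,\gamma$ is a permutation. $\mathcal{D}$ denotes Green's $\mathcal{D}$-relation of $\mathscr{M}_n$. *)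

(* Defs.v *)
From mathcomp Require Import all_boot all_fingroup.
Set Implicit Arguments. Unset Strict Implicit. Unset Printing Implicit Defensive.

(* Binary relations on [n] = {0,...,n-1}, i.e. n x n Boolean matrices,
   represented as sets of pairs.  The monoid B_n. *)
Definition brel (n : nat) := {set 'I_n * 'I_n}.

Definition bmul n (a b : brel n) : brel n :=
  [set ij | [exists k : 'I_n, ((ij.1, k) \in a) && ((k, ij.2) \in b)]].

Definition bid n : brel n := [set ij : 'I_n * 'I_n | ij.1 == ij.2].

Definition is_perm_rel n (a : brel n) : Prop :=
  exists s : {perm 'I_n}, a = [set ij : 'I_n * 'I_n | s ij.1 == ij.2].

Definition multiperm n (a : brel n) : Prop :=
  (forall i : 'I_n, exists j : 'I_n, (i, j) \in a) /\
  (forall j : 'I_n, exists i : 'I_n, (i, j) \in a).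

Definition prime_rel n (a : brel n) : Prop :=
  ~ is_perm_rel a /\
  forall b c : brel n, a = bmul b c -> is_perm_rel b \/ is_perm_rel c.

Definition R_rel n (a b : brel n) : Prop :=
  (exists x, multiperm x /\ a = bmul b x) /\ (exists y, multiperm y /\ b = bmul a y).
Definition L_rel n (a b : brel n) : Prop :=
  (exists x, multiperm x /\ a = bmul x b) /\ (exists y, multiperm y /\ b = bmul y a).
Definition D_rel n (a b : brel n) : Prop :=
  exists c, multiperm c /\ L_rel a c /\ R_rel c b.

Definition bprod n (s : seq (brel n)) : brel n := foldr (@bmul n) (bid n) s.

Definition generates_Mn n (T : {set brel n}) : Prop :=
  (forall t, t \in T -> multiperm t) /\
  (forall a, multiperm a ->
     exists s : seq (brel n), (forall t, t \in s -> t \in T) /\ a = bprod s).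

(* Main.v *)
Require Import Defs.
From mathcomp Require Import all_boot all_fingroup.
Set Implicit Arguments. Unset Strict Implicit. Unset Printing Implicit Defensive.

Section Aux.
Local Open Scope group_scope.
Variable n : nat.
Implicit Types a b c : brel n.

Definition prel (s : {perm 'I_n}) : brel n := [set ij : 'I_n * 'I_n | s ij.1 == ij.2].

Lemma bmulA a b c : bmul a (bmul b c) = bmul (bmul a b) c.
Proof.
apply/setP => [[i j]]; rewrite !inE /=.
apply/existsP/existsP => [[k /andP[H1]]|[k /andP[]]].
  rewrite inE => /existsP[l /andP[H2 H3]].
  by exists l; rewrite H3 andbT inE; apply/existsP; exists k; rewrite H1.
rewrite inE => /existsP[l /andP[H1 H2]] H3.
by exists l; rewrite H1 inE; apply/existsP; exists k; rewrite H2.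
Qed.

Lemma bmul1 a : bmul (bid n) a = a.
Proof.
apply/setP => [[i j]]; rewrite !inE /=.
apply/existsP/idP => [[k /andP[]]|H]; last by exists i; rewrite H inE /= eqxx.
by rewrite inE /= => /eqP ->.
Qed.

Lemma bmulr1 a : bmul a (bid n) = a.
Proof.
apply/setP => [[i j]]; rewrite !inE /=.
apply/existsP/idP => [[k /andP[H]]|H]; last by exists j; rewrite H inE eqxx.
by rewrite inE /= => /eqP <-.
Qed.

Lemma prelM s t : bmul (prel s) (prel t) = prel (s * t).
Proof.
apply/setP => [[i j]]; rewrite !inE /= permM.
apply/existsP/idP => [[k /andP[]]|H].
  by rewrite !inE /= => /eqP -> /eqP ->.
by exists (s i); rewrite !inE /= eqxx.
Qed.

Lemma prel1 : prel 1 = bid n.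
Proof. by apply/setP => [[i j]]; rewrite !inE perm1. Qed.

Lemma prel_multi s : multiperm (prel s).
Proof.
split=> [i|j]; first by exists (s i); rewrite inE eqxx.
by exists (s^-1 j); rewrite inE /= permKV.
Qed.

Lemma bmul_multi a b : multiperm a -> multiperm b -> multiperm (bmul a b).
Proof.
move=> [Ra Ca] [Rb Cb]; split.
  move=> i; have [k Hk] := Ra i; have [j Hj] := Rb k.
  by exists j; rewrite inE; apply/existsP; exists k; rewrite Hk Hj.
move=> j; have [k Hk] := Cb j; have [i Hi] := Ca k.
by exists i; rewrite inE; apply/existsP; exists k; rewrite Hi Hk.
Qed.

Lemma key (p : brel n) (T : {set brel n}) :
  prime_rel p -> (forall t, t \in T -> multiperm t) ->
  forall s : seq (brel n), (forall t, t \in s -> t \in T) ->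
  forall sg, bmul (prel sg) (bprod s) = p ->
  exists t, t \in T /\ multiperm t /\ D_rel t p.
Proof.
move=> [Np Pp] HT; elim=> [|t s IH] Hs sg E.
  by exfalso; apply: Np; exists sg; rewrite -E /= bmulr1.
rewrite /= bmulA in E.
have tT : t \in T by apply: Hs; rewrite inE eqxx.
have [[sg' E']|[pi E']] := Pp _ _ (esym E).
  apply: (IH _ sg'); first by move=> u Hu; apply: Hs; rewrite inE Hu orbT.
  by rewrite -E E'.
exists t; split=> //; split; first exact: HT.
exists (bmul (prel sg) t); split; first by apply: bmul_multi; [apply: prel_multi|apply: HT].
split; split.
- exists (prel sg^-1); split; first exact: prel_multi.
  by rewrite bmulA prelM mulVg prel1 bmul1.
- by exists (prel sg); split; first exact: prel_multi.
- exists (prel pi^-1); split; first exact: prel_multi.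
  by rewrite -E E' -bmulA prelM mulgV prel1 bmulr1.
- by exists (prel pi); split; [exact: prel_multi | rewrite -E E'].
Qed.

End Aux.

(* A D-class D of M_n containing a prime element p is D = {x in M_n | x D p}. *)
Theorem lemma4p7 (n : nat) (p : brel n) (T : {set brel n}) :
  multiperm p -> prime_rel p -> generates_Mn T ->
  exists t, t \in T /\ multiperm t /\ D_rel t p.
Proof.
move=> Mp Pp [HT HG]; have [s [Hs E]] := HG _ Mp.
by apply: (key Pp HT Hs (sg := 1)); rewrite prel1 bmul1.
Qed.
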